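(* An idempotent semiring $S$ belongs to $\mathbf{V}_{\mathcal{D}}$ if and only if $S$ is isomorphic to a spined product of an idempotent semiring $S_1\in\mathbf{V}_{\mathcal{L}}$ and an idempotent semiring $S_2\in\mathbf{V}_{\mathcal{R}}$ with respect to some distributive lattice $D$.
   Context: An idempotent semiring is an algebra $(S,+,\cdot)$ with $(S,+)$, $(S,\cdot)$ bands and both distributive laws; addition not assumed commutative. $\mathbf{V}_{\mathcal{D}}$, $\mathbf{V}_{\mathcal{L}}$, $\mathbf{V}_{\mathcal{R}}$ denote the varieties of idempotent semirings on which the Green's relation $\mathcal{D}^{\bullet}$ (resp. $\mathcal{L}^{\bullet}$, $\mathcal{R}^{\bullet}$) is the least distributive lattice congruence; equivalently, those satisfying $x\approx xyx+x+xyx$ (resp. $x\approx xy+x+xy$, $x\approx yx+x+yx$). Here $a\,\mathcal{D}^{\bullet}\,b$ iff $aba=a,\ bab=b$; $a\,\mathcal{L}^{\bullet}\,b$ iff $ab=a,\ ba=b$; $a\,\mathcal{R}^{\bullet}\,b$ iff $ab=b,\ ba=a$. Given semirings $S_1,S_2$, a distributive lattice $D$ and surjective homomorphisms $\phi_1:S_1\to D$, $\phi_2:S_2\to D$, the spined product of $S_1$ and $S_2$ with respect to $D$ is the subsemiring $\{(s_1,s_2)\in S_1\times S_2:\phi_1(s_1)=\phi_2(s_2)\}$ of $S_1\times S_2$. *)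

(* Defs.v *)
Record alg22 := Alg22 {
  car :> Type;
  sadd : car -> car -> car;
  smul : car -> car -> car
}.
Arguments sadd {a} _ _.
Arguments smul {a} _ _.

(* Idempotent semiring: (S,+) and (S,.) bands, both distributive laws;
   addition NOT assumed commutative. *)
Definition idem_semiring (S : alg22) : Prop :=
  (forall x y z : S, sadd x (sadd y z) = sadd (sadd x y) z) /\
  (forall x : S, sadd x x = x) /\
  (forall x y z : S, smul x (smul y z) = smul (smul x y) z) /\
  (forall x : S, smul x x = x) /\
  (forall x y z : S, smul x (sadd y z) = sadd (smul x y) (smul x z)) /\
  (forall x y z : S, smul (sadd x y) z = sadd (smul x z) (smul y z)).

Definition distr_lattice (D : alg22) : Prop :=
  idem_semiring D /\
  (forall x y : D, sadd x y = sadd y x) /\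
  (forall x y : D, smul x y = smul y x) /\
  (forall x y : D, sadd x (smul x y) = x) /\
  (forall x y : D, smul x (sadd x y) = x).

Definition in_VD (S : alg22) : Prop :=
  idem_semiring S /\
  forall x y : S, x = sadd (sadd (smul (smul x y) x) x) (smul (smul x y) x).
Definition in_VL (S : alg22) : Prop :=
  idem_semiring S /\
  forall x y : S, x = sadd (sadd (smul x y) x) (smul x y).
Definition in_VR (S : alg22) : Prop :=
  idem_semiring S /\
  forall x y : S, x = sadd (sadd (smul y x) x) (smul y x).

Definition is_hom (S T : alg22) (f : S -> T) : Prop :=
  (forall x y : S, f (sadd x y) = sadd (f x) (f y)) /\
  (forall x y : S, f (smul x y) = smul (f x) (f y)).

Definition surjective {A B : Type} (f : A -> B) : Prop :=
  forall b, exists a, f a = b.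

(* f : S -> S1 x S2 is an isomorphism of S onto the spined product
   {(s1,s2) | phi1 s1 = phi2 s2} of S1 and S2 w.r.t. D (the subsemiring of
   S1 x S2 with componentwise operations): f is a homomorphism into the
   direct product, injective, and its image is exactly the spined product. *)
Definition iso_onto_spined (S S1 S2 D : alg22)
    (phi1 : S1 -> D) (phi2 : S2 -> D) (f : S -> (S1 * S2)%type) : Prop :=
  (forall x y : S, f (sadd x y) =
      (sadd (fst (f x)) (fst (f y)), sadd (snd (f x)) (snd (f y)))) /\
  (forall x y : S, f (smul x y) =
      (smul (fst (f x)) (fst (f y)), smul (snd (f x)) (snd (f y)))) /\
  (forall x y : S, f x = f y -> x = y) /\
  (forall p : (S1 * S2)%type, phi1 (fst p) = phi2 (snd p) <-> exists x, f x = p).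

(* Main.v *)
Require Import Defs.
From Stdlib Require Import List FunctionalExtensionality PropExtensionality ProofIrrelevance IndefiniteDescription.
Import ListNotations.

Infix "⊕" := sadd (at level 50, left associativity).
Infix "⊗" := smul (at level 40, left associativity).

Section Basics.
Context {S : alg22} (H : idem_semiring S).
Lemma addA (x y z : S) : x ⊕ (y ⊕ z) = x ⊕ y ⊕ z. Proof. apply H. Qed.
Lemma addI (x : S) : x ⊕ x = x. Proof. apply H. Qed.
Lemma mulA (x y z : S) : x ⊗ (y ⊗ z) = x ⊗ y ⊗ z. Proof. apply H. Qed.
Lemma mulI (x : S) : x ⊗ x = x. Proof. apply H. Qed.
Lemma dL (x y z : S) : x ⊗ (y ⊕ z) = x ⊗ y ⊕ x ⊗ z. Proof. apply H. Qed.
Lemma dR (x y z : S) : (x ⊕ y) ⊗ z = x ⊗ z ⊕ y ⊗ z. Proof. apply H. Qed.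

Fixpoint ev (a : S) (l : list S) : S :=
  match l with nil => a | b :: l' => ev (a ⊗ b) l' end.
Lemma ev_app a l1 l2 : ev a (l1 ++ l2) = ev (ev a l1) l2.
Proof. revert a; induction l1; simpl; auto. Qed.
Lemma ev_assoc c d m : ev (c ⊗ d) m = c ⊗ ev d m.
Proof. revert d; induction m as [|e m IH]; intro d; simpl; auto.
  rewrite <- mulA. apply IH. Qed.
Lemma sq_mid a p u0 us q :
  ev a (p ++ u0 :: us ++ u0 :: us ++ q) = ev a (p ++ u0 :: us ++ q).
Proof.
  rewrite !ev_app. simpl. rewrite !ev_app. simpl. rewrite !ev_app.
  rewrite !ev_assoc. rewrite <- mulA, <- ev_assoc, mulI.
  reflexivity. Qed.
Lemma sq_start u0 us q :
  ev u0 (us ++ u0 :: us ++ q) = ev u0 (us ++ q).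
Proof.
  rewrite !ev_app. simpl. rewrite ev_app. rewrite ev_assoc, mulI. reflexivity. Qed.

Definition le (u v : S) := u ⊕ v = u /\ v ⊕ u = u.
Lemma le_anti u v : le u v -> le v u -> u = v.
Proof. intros [h1 h2] [h3 h4]. rewrite <- h2. exact h3. Qed.
Lemma le_mulL c u v : le u v -> le (c ⊗ u) (c ⊗ v).
Proof. intros [h1 h2]; split; rewrite <- dL; congruence. Qed.
Lemma le_mulR c u v : le u v -> le (u ⊗ c) (v ⊗ c).
Proof. intros [h1 h2]; split; rewrite <- dR; congruence. Qed.
End Basics.

Section VD.
Context {S : alg22} (HV : in_VD S).
Let H : idem_semiring S := proj1 HV.
Lemma vd (x y : S) : x = x ⊗ y ⊗ x ⊕ x ⊕ x ⊗ y ⊗ x. Proof. apply HV. Qed.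
Lemma F1a (x y : S) : x ⊕ x ⊗ y ⊗ x = x.
Proof. pose proof (vd x y) as Hx. set (a := x ⊗ y ⊗ x) in *. rewrite Hx at 1.
  rewrite <- (addA H _ a a), (addI H). symmetry; exact Hx. Qed.
Lemma F1b (x y : S) : x ⊗ y ⊗ x ⊕ x = x.
Proof. pose proof (vd x y) as Hx. set (a := x ⊗ y ⊗ x) in *. rewrite Hx at 1.
  rewrite !(addA H), (addI H). symmetry; exact Hx. Qed.
Lemma le_F1 (x w : S) : le x (x ⊗ w ⊗ x).
Proof. split; [apply F1a|apply F1b]. Qed.

Ltac la := rewrite ?(mulA H).

Lemma REG (x y z : S) : x ⊗ y ⊗ x ⊗ z ⊗ x = x ⊗ y ⊗ z ⊗ x.
Proof.
  assert (h1 : le (x ⊗ y ⊗ x ⊗ z ⊗ x) (x ⊗ y ⊗ z ⊗ x)).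
  { pose proof (le_mulR H (z ⊗ x) _ _ (le_mulL H (x ⊗ y) _ _ (le_F1 x (y ⊗ z)))) as t.
    la. rewrite ?(mulA H) in t.
    assert (e : x⊗y⊗x⊗y⊗z⊗x⊗z⊗x = x⊗y⊗z⊗x).
    { transitivity (ev x [y;z;x;z;x]); [exact (sq_start H x [y] [z;x;z;x]) | exact (sq_mid H x [y] z [x] [])]. }
    rewrite e in t. exact t. }
  assert (h2 : le (x ⊗ y ⊗ z ⊗ x) ((x ⊗ y ⊗ x ⊗ z ⊗ x) ⊗ (x ⊗ y ⊗ z ⊗ x))).
  { pose proof (le_mulR H (y ⊗ z ⊗ x) _ _ (le_F1 x (y ⊗ x ⊗ z))) as t.
    la. rewrite ?(mulA H) in t.
    assert (e : x⊗y⊗x⊗z⊗x⊗x⊗y⊗z⊗x = x⊗y⊗x⊗z⊗x⊗y⊗z⊗x).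
    { exact (sq_mid H x [y;x;z] x [] [y;z;x]). }
    rewrite e. exact t. }
  assert (h3 : le ((x ⊗ y ⊗ x ⊗ z ⊗ x) ⊗ (x ⊗ y ⊗ z ⊗ x)) (x ⊗ y ⊗ z ⊗ x)).
  { pose proof (le_mulR H (x ⊗ y ⊗ z ⊗ x) _ _ h1) as t. rewrite (mulI H) in t. exact t. }
  pose proof (le_anti _ _ h3 h2) as h4.
  assert (h5 : le (x ⊗ y ⊗ z ⊗ x) ((x ⊗ y ⊗ z ⊗ x) ⊗ (x ⊗ y ⊗ x ⊗ z ⊗ x))).
  { pose proof (le_mulL H (x ⊗ y ⊗ z) _ _ (le_F1 x (y ⊗ x ⊗ z))) as t.
    la. rewrite ?(mulA H) in t.
    assert (e : x⊗y⊗z⊗x⊗x⊗y⊗x⊗z⊗x = x⊗y⊗z⊗x⊗y⊗x⊗z⊗x).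
    { exact (sq_mid H x [y;z] x [] [y;x;z;x]). }
    rewrite e. exact t. }
  assert (h6 : le ((x ⊗ y ⊗ z ⊗ x) ⊗ (x ⊗ y ⊗ x ⊗ z ⊗ x)) (x ⊗ y ⊗ z ⊗ x)).
  { pose proof (le_mulL H (x ⊗ y ⊗ z ⊗ x) _ _ h1) as t. rewrite (mulI H) in t. exact t. }
  pose proof (le_anti _ _ h6 h5) as h7.
  assert (h8 : (x ⊗ y ⊗ x ⊗ z ⊗ x) ⊗ (x ⊗ y ⊗ z ⊗ x) ⊗ (x ⊗ y ⊗ x ⊗ z ⊗ x) = x ⊗ y ⊗ x ⊗ z ⊗ x).
  { la.
    transitivity (ev x [y;x;z;x;y;z;x;x;y;x;z;x]); [exact (sq_mid H x [y;x;z] x [] [y;z;x;x;y;x;z;x])|].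
    transitivity (ev x [y;x;z;x;y;z;x;y;x;z;x]); [exact (sq_mid H x [y;x;z;x;y;z] x [] [y;x;z;x])|].
    transitivity (ev x [y;x;z;x;y;x;z;x]); [exact (sq_mid H x [y;x] z [x;y] [x;z;x])|].
    exact (sq_start H x [y;x;z] [x]). }
  rewrite <- h8, h4, h7. reflexivity.
Qed.

Lemma L2 (x y z : S) : x ⊗ y = y -> y ⊗ x = x -> x ⊗ z ⊗ (y ⊗ z) = y ⊗ z.
Proof.
  intros hxy hyx.
  assert (pq : x ⊗ z ⊗ (y ⊗ z) ⊗ (y ⊗ z) = x ⊗ z ⊗ (y ⊗ z)).
  { la. exact (sq_mid H x [z] y [z] []). }
  assert (pa : x ⊗ z ⊗ (y ⊗ z) = y ⊗ x ⊗ z ⊗ (y ⊗ z)) by (rewrite hyx; reflexivity).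
  assert (qa : y ⊗ z = y ⊗ x ⊗ y ⊗ z) by (rewrite hyx, hxy; reflexivity).
  assert (py : x ⊗ z ⊗ (y ⊗ z) ⊗ y = y ⊗ x ⊗ z ⊗ y).
  { rewrite pa. pose proof (REG y (x ⊗ z) z) as r. la. rewrite ?(mulA H) in r. rewrite r.
    exact (sq_mid H y [x] z [] [y]). }
  assert (qy : y ⊗ z ⊗ y = y ⊗ x ⊗ z ⊗ y).
  { rewrite qa at 1. exact (REG y x z). }
  rewrite <- pq. rewrite (mulA H), py, <- qy, <- (mulA H), (mulI H). reflexivity.
Qed.

Lemma L3 (x y z : S) : x ⊗ y = y -> y ⊗ x = x -> x ⊗ z = y ⊗ z.
Proof.
  intros hxy hyx.
  assert (a1 : le (y ⊗ z) (x ⊗ z)).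
  { pose proof (le_mulL H y _ _ (le_F1 z x)) as t.
    rewrite (mulA H), (mulA H), <- (mulA H (y ⊗ z)), (L2 y x z hyx hxy) in t. exact t. }
  assert (a2 : le (x ⊗ z) (y ⊗ z)).
  { pose proof (le_mulL H x _ _ (le_F1 z y)) as t.
    rewrite (mulA H), (mulA H), <- (mulA H (x ⊗ z)), (L2 x y z hxy hyx) in t. exact t. }
  apply le_anti; assumption.
Qed.
End VD.

Definition op (S : alg22) : alg22 := Alg22 (car S) (@sadd S) (fun a b => @smul S b a).

Lemma op_VD (S : alg22) : in_VD S -> in_VD (op S).
Proof.
  intros HV. pose proof (proj1 HV) as H.
  split; [repeat split|]; cbn; intros.
  - apply (addA H).
  - apply (addI H).
  - symmetry; apply (mulA H).
  - apply (mulI H).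
  - apply (dR H).
  - apply (dL H).
  - rewrite (mulA H). apply (vd HV).
Qed.

Lemma L3' (S : alg22) (HV : in_VD S) (x y z : S) : x ⊗ y = x -> y ⊗ x = y -> z ⊗ x = z ⊗ y.
Proof. intros h1 h2. exact (L3 (op_VD S HV) x y z h2 h1). Qed.

Lemma surj_idem {S T : alg22} (g : S -> T) :
  idem_semiring S -> is_hom S T g -> surjective g -> idem_semiring T.
Proof.
  intros [h1 [h2 [h3 [h4 [h5 h6]]]]] [ga gm] gs.
  repeat split; intros;
  repeat match goal with v : car T |- _ => destruct (gs v) as [? <-]; clear v end;
  repeat (rewrite <- ga || rewrite <- gm); f_equal; auto.
Qed.

Section Quot.
Context {S : alg22} (E : S -> S -> Prop)
  (Erefl : forall x, E x x) (Esym : forall x y, E x y -> E y x)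
  (Etrans : forall x y z, E x y -> E y z -> E x z)
  (Eadd : forall a a' b b', E a a' -> E b b' -> E (a ⊕ b) (a' ⊕ b'))
  (Emul : forall a a' b b', E a a' -> E b b' -> E (a ⊗ b) (a' ⊗ b')).

Definition qcar := {P : S -> Prop | exists x, P = E x}.
Definition pr (x : S) : qcar := exist _ (E x) (ex_intro _ x eq_refl).
Definition rep (P : qcar) : S := proj1_sig (constructive_indefinite_description _ (proj2_sig P)).
Lemma rep_spec P : proj1_sig P = E (rep P).
Proof. unfold rep. destruct (constructive_indefinite_description _ _). simpl. exact e. Qed.
Lemma pr_rep P : pr (rep P) = P.
Proof. destruct P as [P hP]. unfold pr. apply eq_sig_hprop.
  - intros; apply proof_irrelevance.
  - simpl. pose proof (rep_spec (exist _ P hP)) as r. simpl in r. rewrite r. reflexivity. Qed.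
Lemma pr_eq x y : pr x = pr y <-> E x y.
Proof. split.
  - intro h. assert (e : E x = E y) by (apply (f_equal (@proj1_sig _ _)) in h; exact h).
    rewrite e. apply Erefl.
  - intro h. unfold pr. apply eq_sig_hprop; [intros; apply proof_irrelevance|]. simpl.
    apply functional_extensionality; intro z. apply propositional_extensionality.
    split; intro k; eauto. Qed.
Lemma E_rep x : E (rep (pr x)) x.
Proof. apply pr_eq. rewrite pr_rep. reflexivity. Qed.

Definition Q : alg22 := Alg22 qcar (fun P P' => pr (rep P ⊕ rep P')) (fun P P' => pr (rep P ⊗ rep P')).
Lemma pr_hom : is_hom S Q pr.
Proof. split; intros x y; cbn; apply pr_eq.
  - apply Eadd; apply Esym, E_rep.
  - apply Emul; apply Esym, E_rep. Qed.
Lemma pr_surj : surjective (pr : S -> Q).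
Proof. intro P. exists (rep P). apply pr_rep. Qed.
End Quot.


Record cong {S : alg22} (E : S -> S -> Prop) : Prop := {
  c_refl : forall x, E x x; c_sym : forall x y, E x y -> E y x;
  c_trans : forall x y z, E x y -> E y z -> E x z;
  c_add : forall a a' b b', E a a' -> E b b' -> E (a ⊕ b) (a' ⊕ b');
  c_mul : forall a a' b b', E a a' -> E b b' -> E (a ⊗ b) (a' ⊗ b') }.

Lemma prEq {S : alg22} {E : S -> S -> Prop} (C : cong E) x y : pr E x = pr E y <-> E x y.
Proof. apply pr_eq; apply C. Qed.
Lemma prHom {S : alg22} {E : S -> S -> Prop} (C : cong E) : is_hom S (Q E) (pr E).
Proof. apply pr_hom; apply C. Qed.
Lemma prAdd {S : alg22} {E : S -> S -> Prop} (C : cong E) x y : pr E (x ⊕ y) = sadd (a := Q E) (pr E x) (pr E y).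
Proof. apply (prHom C). Qed.
Lemma prMul {S : alg22} {E : S -> S -> Prop} (C : cong E) x y : pr E (x ⊗ y) = smul (a := Q E) (pr E x) (pr E y).
Proof. apply (prHom C). Qed.

Lemma induced {S : alg22} (E E' : S -> S -> Prop) (C : cong E) (C' : cong E')
   (sub : forall x y, E x y -> E' x y) :
   exists phi : Q E -> Q E',
     is_hom _ _ phi /\ surjective phi /\ forall x, phi (pr E x) = pr E' x.
Proof.
  exists (fun P => pr E' (rep E P)).
  assert (k : forall x, pr E' (rep E (pr E x)) = pr E' x).
  { intro x. apply (prEq C'). apply sub. apply E_rep; apply C. }
  split; [|split].
  - split; intros P P'; destruct (pr_surj E P) as [x <-];
      destruct (pr_surj E P') as [y <-].
    + rewrite <- (prAdd C), !k. apply (prAdd C').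
    + rewrite <- (prMul C), !k. apply (prMul C').
  - intro D. destruct (pr_surj E' D) as [x <-].
    exists (pr E x). apply k.
  - exact k.
Qed.

Section Main.
Context {S : alg22} (HV : in_VD S).
Let H : idem_semiring S := proj1 HV.

Definition ER (x y : S) := forall s, x ⊗ s = y ⊗ s.
Definition EL (x y : S) := forall s, s ⊗ x = s ⊗ y.
Definition ED (x y : S) := forall s t, s ⊗ x ⊗ t = s ⊗ y ⊗ t.

Lemma cER : cong ER.
Proof. split; unfold ER; intros.
  - reflexivity. - symmetry; auto. - congruence.
  - rewrite !(dR H). congruence.
  - rewrite <- !(mulA H). rewrite H1, H0. reflexivity.
Qed.
Lemma cEL : cong EL.
Proof. split; unfold EL; intros.
  - reflexivity. - symmetry; auto. - congruence.
  - rewrite !(dL H). congruence.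
  - rewrite !(mulA H). rewrite H0, H1. reflexivity.
Qed.
Lemma cED : cong ED.
Proof. split; unfold ED; intros.
  - reflexivity. - symmetry; auto. - congruence.
  - rewrite !(dL H), !(dR H). congruence.
  - rewrite !(mulA H). rewrite <- !(mulA H _ _ t). rewrite H0.
    rewrite !(mulA H). apply H1.
Qed.

Lemma Dlem (u v : S) : u ⊗ v ⊗ u = u -> v ⊗ u ⊗ v = v -> ED u v.
Proof.
  intros h1 h2 s t.
  assert (r : forall t, u ⊗ t = u ⊗ v ⊗ t).
  { intro t0. apply (L3 HV).
    - rewrite (mulA H), (mulI H). reflexivity.
    - exact h1. }
  assert (l : forall s, s ⊗ (u ⊗ v) = s ⊗ v).
  { intro s0. apply (L3' S HV).
    - rewrite <- (mulA H), (mulI H). reflexivity.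
    - rewrite (mulA H). exact h2. }
  rewrite <- (mulA H s u t), r, (mulA H), (mulA H), <- (mulA H s u v), l. reflexivity.
Qed.

Lemma C1 (x y : S) : ED (x ⊗ y) (y ⊗ x).
Proof.
  assert (g : forall a b : S, a ⊗ b ⊗ (b ⊗ a) ⊗ (a ⊗ b) = a ⊗ b).
  { intros a b. rewrite ?(mulA H).
    transitivity (ev a [b;a;a;b]); [exact (sq_mid H a [] b [] [a;a;b])|].
    transitivity (ev a [b;a;b]); [exact (sq_mid H a [b] a [] [b])|].
    exact (sq_start H a [b] []). }
  apply Dlem; apply g.
Qed.

Lemma A1 (x y : S) : ED (x ⊕ x ⊗ y) x.
Proof.
  assert (e1 : (x ⊕ x ⊗ y) ⊗ x = x).
  { rewrite (dR H), (mulI H). apply (F1a HV). }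
  assert (e2 : x ⊗ (x ⊕ x ⊗ y) = x ⊕ x ⊗ y).
  { rewrite (dL H), (mulI H), (mulA H), (mulI H). reflexivity. }
  apply Dlem.
  - rewrite e1. exact e2.
  - rewrite e2. exact e1.
Qed.

Lemma A2 (x y : S) : ED (x ⊗ y ⊕ x) x.
Proof.
  assert (e1 : (x ⊗ y ⊕ x) ⊗ x = x).
  { rewrite (dR H), (mulI H). apply (F1b HV). }
  assert (e2 : x ⊗ (x ⊗ y ⊕ x) = x ⊗ y ⊕ x).
  { rewrite (dL H), (mulI H), (mulA H), (mulI H). reflexivity. }
  apply Dlem.
  - rewrite e1. exact e2.
  - rewrite e2. exact e1.
Qed.

End Main.

Lemma subRD {S : alg22} (HV : in_VD S) x y : @ER S x y -> ED x y.
Proof. intros h s t. rewrite <- !(mulA (proj1 HV) s). rewrite h. reflexivity. Qed.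
Lemma subLD {S : alg22} (HV : in_VD S) x y : @EL S x y -> ED x y.
Proof. intros h s t. rewrite h. reflexivity. Qed.

Lemma D_lattice {S : alg22} (HV : in_VD S) : distr_lattice (Q (@ED S)).
Proof.
  pose proof (proj1 HV) as H. pose proof (cED HV) as C.
  assert (comm : forall a b : S, smul (a := Q ED) (pr ED a) (pr ED b) = smul (a := Q ED) (pr ED b) (pr ED a)).
  { intros a b. rewrite <- !(prMul C). apply (prEq C). apply (C1 HV). }
  split; [exact (@surj_idem _ (Q ED) (pr ED) H (prHom C) (pr_surj ED))|].
  split; [|split; [|split]]; intros P P';
    destruct (pr_surj ED P) as [x <-]; destruct (pr_surj ED P') as [y <-].
  - rewrite <- !(prAdd C).
    assert (eu : pr ED (x ⊕ y) = pr ED ((x ⊕ y) ⊗ (y ⊕ x))).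
    { assert (ee : (x ⊕ y) ⊗ (y ⊕ x) = (x ⊗ y ⊕ x) ⊕ (y ⊕ y ⊗ x))
        by (rewrite (dR H), !(dL H), !(mulI H); reflexivity).
      rewrite ee, !(prAdd C (_ ⊕ _)).
      rewrite (proj2 (prEq C _ _) (A2 HV x y)), (proj2 (prEq C _ _) (A1 HV y x)).
      first [reflexivity | symmetry; apply (prAdd C) | apply (prAdd C)]. }
    assert (ev' : pr ED (y ⊕ x) = pr ED ((y ⊕ x) ⊗ (x ⊕ y))).
    { assert (ee : (y ⊕ x) ⊗ (x ⊕ y) = (y ⊗ x ⊕ y) ⊕ (x ⊕ x ⊗ y))
        by (rewrite (dR H), !(dL H), !(mulI H); reflexivity).
      rewrite ee, !(prAdd C (_ ⊕ _)).
      rewrite (proj2 (prEq C _ _) (A2 HV y x)), (proj2 (prEq C _ _) (A1 HV x y)).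
      first [reflexivity | symmetry; apply (prAdd C) | apply (prAdd C)]. }
    rewrite eu, ev', !(prMul C). apply comm.
  - apply comm.
  - rewrite <- (prMul C), <- (prAdd C). apply (prEq C). apply (A1 HV).
  - rewrite <- (prAdd C), <- (prMul C). apply (prEq C).
    rewrite (dL H), (mulI H). apply (A1 HV).
Qed.

Theorem theorem4p9 (S : alg22) (HS : idem_semiring S) :
  in_VD S <->
  exists (S1 S2 D : alg22) (phi1 : S1 -> D) (phi2 : S2 -> D)
         (f : S -> (S1 * S2)%type),
    in_VL S1 /\ in_VR S2 /\ distr_lattice D /\
    is_hom S1 D phi1 /\ surjective phi1 /\
    is_hom S2 D phi2 /\ surjective phi2 /\
    iso_onto_spined S S1 S2 D phi1 phi2 f.
Proof.
  split.
  - intro HV. pose proof (proj1 HV) as H.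
    pose proof (cER HV) as CR. pose proof (cEL HV) as CL. pose proof (cED HV) as CD.
    destruct (induced ER ED CR CD (subRD HV)) as [phi1 [h1 [s1 k1]]].
    destruct (induced EL ED CL CD (subLD HV)) as [phi2 [h2 [s2 k2]]].
    exists (Q ER), (Q EL), (Q ED), phi1, phi2, (fun x => (pr ER x, pr EL x)).
    split; [|split; [|split; [|split; [|split; [|split; [|split]]]]]]; auto.
    + split; [exact (@surj_idem _ (Q ER) (pr ER) H (prHom CR) (pr_surj ER))|].
      intros P P'. destruct (pr_surj ER P) as [x <-]; destruct (pr_surj ER P') as [y <-].
      rewrite <- !(prMul CR), <- !(prAdd CR). apply (prEq CR). intro s. apply (L3 HV).
      * rewrite !(dL H), !(mulA H), !(mulI H). reflexivity.
      * rewrite !(dR H), (mulI H). symmetry; apply (vd HV).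
    + split; [exact (@surj_idem _ (Q EL) (pr EL) H (prHom CL) (pr_surj EL))|].
      intros P P'. destruct (pr_surj EL P) as [x <-]; destruct (pr_surj EL P') as [y <-].
      rewrite <- !(prMul CL), <- !(prAdd CL). apply (prEq CL). intro s. apply (L3' S HV).
      * rewrite !(dL H), !(mulA H), (mulI H). symmetry; apply (vd HV).
      * rewrite !(dR H), <- !(mulA H), !(mulI H). reflexivity.
    + apply D_lattice; exact HV.
    + split; [|split; [|split]].
      * intros x y. cbn [fst snd]. f_equal; [apply (prAdd CR)|apply (prAdd CL)].
      * intros x y. cbn [fst snd]. f_equal; [apply (prMul CR)|apply (prMul CL)].
      * intros x y e. pose proof (f_equal fst e) as e1; pose proof (f_equal snd e) as e2; cbn [fst snd] in e1, e2.
        apply (prEq CR) in e1. apply (prEq CL) in e2.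
        rewrite <- (mulI H x), e1, e2, (mulI H). reflexivity.
      * intros [P P']. cbn [fst snd]. split.
        -- destruct (pr_surj ER P) as [a <-]; destruct (pr_surj EL P') as [b <-].
           rewrite k1, k2. intro e. apply (prEq CD) in e.
           exists (a ⊗ b). f_equal.
           ++ apply (prEq CR). intro s. rewrite <- (e a s), (mulI H). reflexivity.
           ++ apply (prEq CL). intro s. rewrite (mulA H), (e s b), <- (mulA H), (mulI H). reflexivity.
        -- intros [x e]. pose proof (f_equal fst e) as e1; pose proof (f_equal snd e) as e2; cbn [fst snd] in e1, e2.
           subst P P'. rewrite k1, k2. reflexivity.
  - intros (S1 & S2 & D & phi1 & phi2 & f & VL & VR & _ & _ & _ & _ & _ & fa & fm & finj & _).
    split; [exact HS|]. intros x y. apply finj.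
    rewrite !fa, !fm. cbn [fst snd].
    rewrite (surjective_pairing (f x)) at 1. f_equal.
    + set (a := fst (f x)). set (b := fst (f y)).
      pose proof (proj2 VL a (smul b a)) as t. rewrite (mulA (proj1 VL)) in t. exact t.
    + set (c := snd (f x)). set (d := snd (f y)).
      exact (proj2 VR c (smul c d)).
Qed.
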